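(* Under the standing assumptions, if $J_g\neq\{0\}$ for every $g\in\mathcal G$, then the Galois map $\theta:H\mapsto R^{\beta_H}$, from the set of wide subgroupoids of $\mathcal G$ to the set of subalgebras of $R$ containing $R^\beta$, is injective.
   Context: All rings and algebras are associative and unital. A groupoid is a nonempty set $\mathcal G$ with a partially defined associative multiplication in which every $g$ has an inverse $g^{-1}$, a left identity $r(g)=gg^{-1}$ and a right identity $d(g)=g^{-1}g$; $gh$ is defined iff $d(g)=r(h)$; $\mathcal G_0$ is the set of identities. A subgroupoid is a nonempty subset closed under inverses and defined products; it is wide if it contains $\mathcal G_0$. Standing assumptions: $K$ commutative ring, $R$ a $K$-algebra, $\mathcal G$ a finite groupoid, $\beta=(\{E_g\},\{\beta_g\})$ a unital action of $\mathcal G$ on $R$: $E_g=E_{r(g)}$ is an ideal of $R$, unital with identity $1_g$ (so $1_{g^{-1}}=1_{d(g)}$), $\beta_g:E_{g^{-1}}\to E_g$ a $K$-algebra isomorphism, $\beta_e=\mathrm{id}_{E_e}$ for $e\in\mathcal G_0$, $\beta_g\beta_h(x)=\beta_{gh}(x)$ whenever $d(g)=r(h)$, $x\in E_{h^{-1}}$; $R=\bigoplus_{e\in\mathcal G_0}E_e$; and $R$ is a $\beta$-Galois extension of $R^\beta$: there exist $x_i,y_i\in R$ ($1\le i\le m$) with $\sum_i x_i\beta_g(y_i1_{g^{-1}})=1_g$ if $g\in\mathcal G_0$ and $=0$ otherwise. For a subgroupoid $H$, $R^{\beta_H}=\{r\in R:\beta_h(r1_{h^{-1}})=r1_h\ \forall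 h\in H\}$, and $R^\beta=R^{\beta_{\mathcal G}}$. For $g\in\mathcal G$, $J_g=\{r\in E_g: r\beta_g(x1_{g^{-1}})=xr\ \forall x\in R\}$. *)

(* Defs.v *)
From HB Require Import structures.
From mathcomp Require Import all_boot all_order all_algebra.
Set Implicit Arguments. Unset Strict Implicit. Unset Printing Implicit Defensive.
Import GRing.Theory.
Local Open Scope ring_scope.

(* ---------- Finite groupoids ----------
   A finite groupoid is a finite type G with a multiplication [mul], which is
   only meaningful (i.e. "defined") on pairs (g,h) with d g = r h, an inverse
   [inv], range [r] (r g = g g^{-1}) and domain [d] (d g = g^{-1} g). *)
Record is_groupoid (G : finType) (mul : G -> G -> G) (inv r d : G -> G) : Prop := {
  gpd_nonempty : (0 < #|G|)%N;
  gpd_r_inv : forall g, r (inv g) = d g;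
  gpd_d_inv : forall g, d (inv g) = r g;
  gpd_mulV : forall g, mul g (inv g) = r g;
  gpd_mulVg : forall g, mul (inv g) g = d g;
  gpd_rr : forall g, r (r g) = r g;
  gpd_dr : forall g, d (r g) = r g;
  gpd_rd : forall g, r (d g) = d g;
  gpd_dd : forall g, d (d g) = d g;
  gpd_mul1g : forall g, mul (r g) g = g;
  gpd_mulg1 : forall g, mul g (d g) = g;
  gpd_r_mul : forall g h, d g = r h -> r (mul g h) = r g;
  gpd_d_mul : forall g h, d g = r h -> d (mul g h) = d h;
  gpd_assoc : forall g h k, d g = r h -> d h = r k ->
                mul (mul g h) k = mul g (mul h k) }.

Definition G0 (G : finType) (r : G -> G) : {set G} := [set e | r e == e].

Definition is_subgroupoid (G : finType) (mul : G -> G -> G) (inv r d : G -> G)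
  (H : {set G}) : Prop :=
  [/\ H != set0,
      forall h, h \in H -> inv h \in H &
      forall g h, g \in H -> h \in H -> d g = r h -> mul g h \in H].

Definition is_wide_subgroupoid (G : finType) (mul : G -> G -> G) (inv r d : G -> G)
  (H : {set G}) : Prop :=
  is_subgroupoid mul inv r d H /\ G0 r \subset H.

(* ---------- Unital actions ----------
   E g is an ideal of R (as a predicate), unital with identity [one g];
   beta g : E (inv g) -> E g is a K-algebra isomorphism (represented by a
   total function, only its restriction to E (inv g) matters). *)
Record unital_action (K : comPzRingType) (R : algType K) (G : finType)
  (mul : G -> G -> G) (inv r d : G -> G)
  (E : G -> R -> Prop) (one : G -> R) (beta : G -> R -> R) : Prop := {
  E_0 : forall g, E g 0;
  E_sub : forall g x y, E g x -> E g y -> E g (x - y);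
  E_mull : forall g a x, E g x -> E g (a * x);
  E_mulr : forall g a x, E g x -> E g (x * a);
  E_r : forall g x, E g x <-> E (r g) x;
  one_in : forall g, E g (one g);
  one_l : forall g x, E g x -> one g * x = x;
  one_r : forall g x, E g x -> x * one g = x;
  beta_in : forall g x, E (inv g) x -> E g (beta g x);
  beta_add : forall g x y, E (inv g) x -> E (inv g) y ->
               beta g (x + y) = beta g x + beta g y;
  beta_mul : forall g x y, E (inv g) x -> E (inv g) y ->
               beta g (x * y) = beta g x * beta g y;
  beta_scale : forall g (k : K) x, E (inv g) x -> beta g (k *: x) = k *: beta g x;
  beta_inj : forall g x y, E (inv g) x -> E (inv g) y -> beta g x = beta g y -> x = y;
  beta_surj : forall g y, E g y -> exists2 x, E (inv g) x & beta g x = y;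
  beta_id : forall e x, e \in G0 r -> E e x -> beta e x = x;
  beta_comp : forall g h x, d g = r h -> E (inv h) x ->
                beta g (beta h x) = beta (mul g h) x }.

Definition direct_sum_decomp (K : comPzRingType) (R : algType K) (G : finType)
  (r : G -> G) (E : G -> R -> Prop) : Prop :=
  (forall x : R, exists f : G -> R,
      (forall e, e \in G0 r -> E e (f e)) /\ x = \sum_(e in G0 r) f e) /\
  (forall f : G -> R, (forall e, e \in G0 r -> E e (f e)) ->
      \sum_(e in G0 r) f e = 0 -> forall e, e \in G0 r -> f e = 0).

Definition galois_ext (K : comPzRingType) (R : algType K) (G : finType)
  (inv r : G -> G) (one : G -> R) (beta : G -> R -> R) : Prop :=
  exists (m : nat) (x y : 'I_m -> R), forall g : G,
    \sum_(i < m) x i * beta g (y i * one (inv g)) =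
      if g \in G0 r then one g else 0.

Definition fixed_by (K : comPzRingType) (R : algType K) (G : finType)
  (inv : G -> G) (one : G -> R) (beta : G -> R -> R) (H : {set G}) (a : R) : Prop :=
  forall h, h \in H -> beta h (a * one (inv h)) = a * one h.

Definition Jg (K : comPzRingType) (R : algType K) (G : finType)
  (inv : G -> G) (E : G -> R -> Prop) (one : G -> R) (beta : G -> R -> R)
  (g : G) (a : R) : Prop :=
  E g a /\ forall x : R, a * beta g (x * one (inv g)) = x * a.

(* Main.v *)
Require Import Defs.
From HB Require Import structures.
From mathcomp Require Import all_boot all_order all_algebra.
Import GRing.Theory.
Local Open Scope ring_scope.

Section Proof3.
Variables (K : comPzRingType) (R : algType K) (G : finType)
  (mul : G -> G -> G) (inv r d : G -> G)
  (E : G -> R -> Prop) (one : G -> R) (beta : G -> R -> R).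
Hypothesis HG : is_groupoid mul inv r d.
Hypothesis HA : unital_action mul inv r d E one beta.
Hypothesis HD : direct_sum_decomp r E.

Lemma E_req {a b} : r a = r b -> forall x, E a x <-> E b x.
Proof. move=> h x; have := E_r HA a x; have := E_r HA b x; rewrite h; tauto. Qed.

Lemma one_req {a b} : r a = r b -> one a = one b.
Proof.
move=> h.
have e1 : one a * one b = one b by apply: (one_l HA); apply: (proj2 (E_req h _)); apply: (one_in HA).
have e2 : one a * one b = one a by apply: (one_r HA); apply: (proj2 (E_req (esym h) _)); apply: (one_in HA).
by rewrite -e1 e2.
Qed.

Lemma E_add g x y : E g x -> E g y -> E g (x + y).
Proof.
move=> hx hy; have := E_sub HA hx (E_sub HA (E_0 HA g) hy).
by rewrite sub0r opprK.
Qed.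

Lemma orth e e' : e \in G0 r -> e' \in G0 r -> e != e' -> one e * one e' = 0.
Proof.
move=> he he' ne.
set p := one e * one e'.
have Ep : E e p by apply: (E_mulr HA); apply: (one_in HA).
have Ep' : E e' p by apply: (E_mull HA); apply: (one_in HA).
pose f := fun x => if x == e then p else if x == e' then - p else 0.
have hf : forall x, x \in G0 r -> E x (f x).
  move=> x _; rewrite /f; case: (x =P e) => [->//|_]; case: (x =P e') => [->|_].
    by rewrite -sub0r; apply: (E_sub HA) => //; apply: (E_0 HA).
  exact: (E_0 HA).
have := (proj2 HD) f hf; rewrite (bigD1 e) //= (bigD1 e') /=; last by rewrite he' eq_sym.
rewrite big1; last by move=> x /andP [/andP [_ ne1] ne2]; rewrite /f (negbTE ne1) (negbTE ne2).
rewrite /f eqxx eq_sym (negbTE ne) eqxx addr0 subrr => /(_ erefl e he).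
by rewrite eqxx.
Qed.

Lemma mul_one {x h} k : E h x -> x * one k = if r h == r k then x else 0.
Proof.
move=> hx; case: eqP => hr.
  by apply: (one_r HA); apply: (proj1 (E_req hr _)).
have -> : x = x * one h by rewrite (one_r HA).
rewrite -mulrA -(one_req (gpd_rr HG h)) -(one_req (gpd_rr HG k)).
rewrite orth ?mulr0 // ?inE ?(gpd_rr HG) //; exact/eqP.
Qed.

Lemma beta0 k : beta k 0 = 0.
Proof.
have h0 := E_0 HA (inv k).
have := beta_add HA h0 h0; rewrite addr0.
by rewrite -{1}(addr0 (beta k 0)) => /addrI <-.
Qed.

Lemma inv_inv g : inv (inv g) = g.
Proof.
have h1 : inv (inv g) = mul (inv (inv g)) (mul (inv g) g).
  by rewrite (gpd_mulVg HG) -(gpd_r_inv HG) -(gpd_d_inv HG) (gpd_mulg1 HG).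
rewrite h1 -(gpd_assoc HG); last by rewrite (gpd_d_inv HG).
  by rewrite (gpd_mulVg HG) (gpd_d_inv HG) (gpd_mul1g HG).
by rewrite (gpd_d_inv HG) (gpd_r_inv HG).
Qed.

Lemma EinvE h z : E (inv h) (z * one (inv h)).
Proof. by apply: (E_mull HA); apply: (one_in HA). Qed.

Lemma L1 k h z :
  beta k (beta h (z * one (inv h)) * one (inv k)) =
  if d k == r h then beta (mul k h) (z * one (inv (mul k h))) else 0.
Proof.
have Eb : E h (beta h (z * one (inv h))) by apply: (beta_in HA); apply: EinvE.
rewrite (mul_one (inv k) Eb) (gpd_r_inv HG) eq_sym.
case: eqP => [hr|_]; last exact: beta0.
rewrite (beta_comp HA) //; last exact: EinvE.
rewrite (one_req (a:=inv h) (b:=inv (mul k h))) //.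
by rewrite !(gpd_r_inv HG) (gpd_d_mul HG).
Qed.

Lemma beta_sum k (I : Type) (s : seq I) (P : pred I) (F : I -> R) :
  (forall i, P i -> E (inv k) (F i)) ->
  beta k (\sum_(i <- s | P i) F i) = \sum_(i <- s | P i) beta k (F i).
Proof.
move=> hF.
apply: (proj2 (big_rec2 (fun y1 y2 => E (inv k) y1 /\ beta k y1 = y2) _ _)).
  by split; [apply: (E_0 HA) | apply: beta0].
move=> i y1 y2 Pi [hy <-]; split; first by apply: E_add => //; apply: hF.
by rewrite (beta_add HA) //; apply: hF.
Qed.


Lemma L3 (H : {set G}) z k :
  beta k ((\sum_(h in H) beta h (z * one (inv h))) * one (inv k)) =
  \sum_(h in H) if d k == r h then beta (mul k h) (z * one (inv (mul k h))) else 0.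
Proof.
rewrite mulr_suml beta_sum; last by move=> i _; apply: (E_mull HA); apply: (one_in HA).
by apply: eq_bigr => h _; rewrite L1.
Qed.

Lemma trace_fixed (H : {set G}) z k : is_wide_subgroupoid mul inv r d H -> k \in H ->
  beta k ((\sum_(h in H) beta h (z * one (inv h))) * one (inv k)) =
  (\sum_(h in H) beta h (z * one (inv h))) * one k.
Proof.
move=> [[_ Hinv Hmul] _] kH.
rewrite L3 mulr_suml.
under [RHS]eq_bigr => h _ do rewrite (mul_one k (beta_in HA (EinvE h z))).
rewrite -!big_mkcondr /=.
rewrite [RHS](reindex_onto (mul k) (mul (inv k))) /=.
  apply: eq_bigl => j; apply/idP/idP.
    move/andP=> [jH /eqP dk].
    have hdi : d (inv k) = r k by rewrite (gpd_d_inv HG).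
    rewrite Hmul // (gpd_r_mul HG dk) eqxx /= -(gpd_assoc HG) //.
    by rewrite (gpd_mulVg HG) dk (gpd_mul1g HG) eqxx.
  move=> /andP [/andP [kjH /eqP rkj] /eqP e].
  have hd : d (inv k) = r (mul k j) by rewrite (gpd_d_inv HG) rkj.
  have dkj : d k = r j by rewrite -e (gpd_r_mul HG hd) (gpd_r_inv HG).
  have jH : j \in H by rewrite -e; apply: Hmul => //; exact: Hinv.
  by rewrite jH dkj eqxx.
move=> i /andP [_ /eqP ri].
rewrite -(gpd_assoc HG); last by rewrite (gpd_d_inv HG).
  by rewrite (gpd_mulV HG) -ri (gpd_mul1g HG).
by rewrite (gpd_r_inv HG).
Qed.


Lemma main_sub (H1 H2 : {set G}) g :
  galois_ext inv r one beta ->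
  (forall g : G, exists2 a : R, Jg inv E one beta g a & a != 0) ->
  is_wide_subgroupoid mul inv r d H1 ->
  (forall a : R, fixed_by inv one beta H1 a -> fixed_by inv one beta H2 a) ->
  g \in H2 -> g \in H1.
Proof.
move=> [m [x [y hxy]]] hJ W1 Heq gH2.
apply/negPn/negP => gH1.
have [[_ Hinv Hmul] Hsub] := W1.
pose t z := \sum_(h in H1) beta h (z * one (inv h)).
have hfix z : beta g (t z * one (inv g)) = t z * one g.
  by apply: (Heq (t z)) => // k kH; apply: trace_fixed.
have e0 : \sum_(i < m) x i * beta g (t (y i) * one (inv g)) = 0.
  under eq_bigr => i _ do rewrite /t L3 mulr_sumr.
  rewrite exchange_big /=; apply: big1 => h hH.
  case: (d g =P r h) => dg; last by apply: big1 => i _; rewrite mulr0.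
  rewrite (hxy (mul g h)); case: ifP => //; rewrite inE => /eqP e.
  exfalso; apply: (negP gH1).
  have rg : r (mul g h) = r g := gpd_r_mul HG dg.
  have hh : mul (inv g) (mul g h) = h.
    rewrite -(gpd_assoc HG); last by [].
      by rewrite (gpd_mulVg HG) dg (gpd_mul1g HG).
    by rewrite (gpd_d_inv HG).
  move: hh; rewrite -e rg -(gpd_d_inv HG) (gpd_mulg1 HG) => hinv.
  by rewrite -(inv_inv g) hinv Hinv.
have e1 : \sum_(i < m) x i * (t (y i) * one g) = one g.
  under eq_bigr => i _ do rewrite mulrA.
  rewrite -mulr_suml /t.
  under eq_bigr => i _ do rewrite mulr_sumr.
  rewrite exchange_big /=.
  under eq_bigr => h _ do rewrite hxy.
  have rgG : r g \in G0 r by rewrite inE (gpd_rr HG).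
  rewrite mulr_suml (bigD1 (r g)) /=; last by apply: (subsetP Hsub).
  rewrite big1 ?addr0.
    by rewrite rgG (one_req (gpd_rr HG g)) (one_l HA) //; apply: (one_in HA).
  move=> h /andP [_ hne]; case: ifP => [|_]; last by rewrite mul0r.
  rewrite inE => /eqP rh.
  by rewrite (mul_one g (one_in HA h)) rh (negbTE hne).
have : one g = 0.
  have ee : \sum_(i < m) x i * beta g (t (y i) * one (inv g)) =
            \sum_(i < m) x i * (t (y i) * one g).
    by apply: eq_bigr => i _; rewrite hfix.
  by rewrite -e1 -ee e0.
have [a [Ea _] anz] := hJ g.
move=> og; move: anz; rewrite -(one_l HA Ea) og mul0r eqxx //.
Qed.

End Proof3.

Theorem theorem3p3 (K : comPzRingType) (R : algType K) (G : finType)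
  (mul : G -> G -> G) (inv r d : G -> G)
  (E : G -> R -> Prop) (one : G -> R) (beta : G -> R -> R) :
  is_groupoid mul inv r d ->
  unital_action mul inv r d E one beta ->
  direct_sum_decomp r E ->
  galois_ext inv r one beta ->
  (forall g : G, exists2 a : R, Jg inv E one beta g a & a != 0) ->
  forall H1 H2 : {set G},
    is_wide_subgroupoid mul inv r d H1 ->
    is_wide_subgroupoid mul inv r d H2 ->
    (forall a : R, fixed_by inv one beta H1 a <-> fixed_by inv one beta H2 a) ->
    H1 = H2.
Proof.
move=> HG HA HD Hgal HJ H1 H2 W1 W2 Heq.
apply/setP => g; apply/idP/idP => gH.
  apply: (@main_sub _ _ _ _ _ _ _ _ _ _ HG HA HD H2 H1 g Hgal HJ W2 _ gH) => a; exact: (proj2 (Heq a)).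
apply: (@main_sub _ _ _ _ _ _ _ _ _ _ HG HA HD H1 H2 g Hgal HJ W1 _ gH) => a; exact: (proj1 (Heq a)).
Qed.
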